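(* Let $(\mathcal X,d)$ be a clustering instance in a metric space $M$ and let $\gamma\ge 3$. Then the standard single-linkage algorithm on $(\mathcal X,d)$ outputs a tree $\mathcal T$ such that every $k$-clustering $\mathcal C^*=\{C_1^*,\dots,C_k^*\}$ of $\mathcal X$ that satisfies the $\gamma$-margin property (with centers $\mu_1,\dots,\mu_k\in M$) is a pruning of $\mathcal T$; i.e., for every $1\le i\le k$ there is a node $N_i$ of $\mathcal T$ with $C_i^*=N_i$.
   Context: Single linkage starts with all singletons of $\mathcal X$ and repeatedly merges the two current clusters $A,B$ minimizing $\min_{a\in A,b\in B}d(a,b)$ until one cluster remains; the tree $\mathcal T$ has as nodes all clusters formed (leaves are singletons, each merge creates a parent of the two merged nodes). A clustering with centers $\mu_1,\dots,\mu_k\in M$ is center-based if $x\in C_i\iff i=\arg\min_j d(x,\mu_j)$, and satisfies the $\gamma$-margin property if for all $i$, every $x\in C_i$, $y\in\mathcal X\setminus C_i$: $\gamma d(x,\mu_i)<d(y,\mu_i)$. *)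

(* Defs.v *)
From HB Require Import structures.
From mathcomp Require Import all_boot all_order all_algebra.
Set Implicit Arguments. Unset Strict Implicit. Unset Printing Implicit Defensive.
Import Order.TTheory GRing.Theory Num.Theory.
Local Open Scope ring_scope.

Section SL.
Variables (R : realFieldType) (M : Type) (d : M -> M -> R).

Definition is_metric : Prop :=
  [/\ forall x y, 0 <= d x y,
      forall x y, d x y = 0 <-> x = y,
      forall x y, d x y = d y x
    & forall x y z, d x z <= d x y + d y z].

(* The clustering instance is a finite subset of M, given as a finite type
   X together with an injective embedding emb : X -> M. *)
Variables (X : finType) (emb : X -> M).

Definition dX (x y : X) : R := d (emb x) (emb y).

(* single-linkage distance of (A,B) is <= that of (A',B'), for nonempty A, B:
   min_{a in A, b in B} d a b <= min_{a' in A', b' in B'} d a' b' *)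
Definition linkage_le (A B A' B' : {set X}) : Prop :=
  exists a b, [/\ a \in A, b \in B &
    forall a' b', a' \in A' -> b' \in B' -> dX a b <= dX a' b'].

Definition sl_step (P Q : {set {set X}}) : Prop :=
  exists A B, [/\ A \in P, B \in P, A != B,
    (forall A' B', A' \in P -> B' \in P -> A' != B' -> linkage_le A B A' B')
  & Q = (A :|: B) |: ((P :\ A) :\ B)].

Fixpoint sl_path (P : {set {set X}}) (s : seq {set {set X}}) : Prop :=
  match s with
  | [::] => True
  | Q :: s' => sl_step P Q /\ sl_path Q s'
  end.

Definition singletons : {set {set X}} := [set [set x] | x : X].

Definition single_linkage_run (s : seq {set {set X}}) : Prop :=
  sl_path singletons s /\ (#|last singletons s| <= 1)%N.

(* Nodes of the tree: all clusters ever formed during the run. *)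
Definition sl_node (s : seq {set {set X}}) (N : {set X}) : Prop :=
  exists2 P, P \in singletons :: s & N \in P.

Definition k_clustering (k : nat) (C : 'I_k -> {set X}) : Prop :=
  [/\ forall i, C i != set0,
      forall i j, i != j -> [disjoint C i & C j]
    & forall x, exists i, x \in C i].

Definition center_based (k : nat) (C : 'I_k -> {set X}) (mu : 'I_k -> M) : Prop :=
  forall x i, x \in C i <-> (forall j, j != i -> d (emb x) (mu i) < d (emb x) (mu j)).

Definition gamma_margin (gamma : R) (k : nat) (C : 'I_k -> {set X})
  (mu : 'I_k -> M) : Prop :=
  forall i x y, x \in C i -> y \notin C i ->
    gamma * d (emb x) (mu i) < d (emb y) (mu i).

End SL.

(* Main.v *)
Require Import Defs.
From HB Require Import structures.
From mathcomp Require Import all_boot all_order all_algebra.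
From mathcomp Require Import ring lra.
Import Order.TTheory GRing.Theory Num.Theory.
Local Open Scope ring_scope.

Section Proof.
Variables (R : realFieldType) (M : Type) (d : M -> M -> R)
  (X : finType) (emb : X -> M).

Lemma main_lem (S : {set X}) (x0 : X) (Hx0 : x0 \in S)
  (sep : forall x y z, x \in S -> y \in S -> z \notin S ->
     dX d emb x y < dX d emb x z)
  (sym : forall x y, dX d emb x y = dX d emb y x) :
  forall s P, sl_path d emb P s -> (#|last P s| <= 1)%N ->
  (forall x, exists2 A, A \in P & x \in A) ->
  (forall A, A \in P -> A \subset S \/ [disjoint A & S]) ->
  exists2 Q, Q \in P :: s & S \in Q.
Proof.
elim=> [|Q s IH] P /=.
  move=> _ /card_le1_eqP Hc cov lam.
  have [A AP x0A] := cov x0.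
  have eqA : forall E, E \in P -> E = A by move=> E EP; exact: Hc.
  exists P; first by rewrite inE eqxx.
  suff -> : S = A by [].
  apply/eqP; rewrite eqEsubset; apply/andP; split.
    apply/subsetP=> y _; have [E EP yE] := cov y; by rewrite -(eqA E EP).
  case: (lam A AP) => // dis; by rewrite (disjointFr dis x0A) in Hx0.
move=> [[A [B [AP BP AB minl ->]]] Hp] Hl cov lam.
case SP: (S \in P).
  by exists P; rewrite ?inE ?eqxx.
have nsub : forall E, E \in P -> ~~ (S \subset E).
  move=> E EP; apply/negP=> SE; case: (lam E EP) => ES.
    have : E = S by apply/eqP; rewrite eqEsubset ES SE.
    by move=> eE; rewrite -eE EP in SP.
  have x0E := subsetP SE x0 Hx0; by rewrite (disjointFr ES x0E) in Hx0.
have [Q' Q'in SQ'] : exists2 Q', Q' \in (A :|: B) |: ((P :\ A) :\ B) :: s & S \in Q'.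
  apply: IH => //.
  - move=> x; have [E EP xE] := cov x.
    case: (eqVneq E A) => [eA|nA].
      by exists (A :|: B); rewrite ?inE ?eqxx // -eA xE.
    case: (eqVneq E B) => [eB|nB].
      by exists (A :|: B); rewrite ?inE ?eqxx // -eB xE orbT.
    by exists E; rewrite // !inE nA nB EP !orbT.
  - move=> E; rewrite !inE => /orP [/eqP ->|/andP [_ /andP [_ EP]]]; last exact: lam.
    case: (lam A AP) => HA; case: (lam B BP) => HB.
    + by left; rewrite subUset HA HB.
    + exfalso.
      have /subsetPn [y yS yA] := nsub A AP.
      have [D DP yD] := cov y.
      have DA : A != D by apply/eqP=> e; rewrite e yD in yA.
      have [a [b [aA bB Hm]]] := minl A D AP DP DA.
      have := Hm a y aA yD.
      have := sep a y b (subsetP HA a aA) yS (negbT (disjointFr HB bB)).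
      move=> h1 h2; have := lt_le_trans h1 h2; by rewrite ltxx.
    + exfalso.
      have /subsetPn [y yS yB] := nsub B BP.
      have [D DP yD] := cov y.
      have DB : D != B by apply/eqP=> e; rewrite -e yD in yB.
      have [a [b [aA bB Hm]]] := minl D B DP BP DB.
      have := Hm y b yD bB.
      have := sep b y a (subsetP HB b bB) yS (negbT (disjointFr HA aA)).
      rewrite (sym b y) (sym b a) => h1 h2; have := lt_le_trans h1 h2; by rewrite ltxx.
    + by right; rewrite -setI_eq0 setIUl setU_eq0 !setI_eq0 HA HB.
exists Q' => //; by rewrite inE Q'in orbT.
Qed.
End Proof.

Theorem theorem7 (R : realFieldType) (M : Type) (d : M -> M -> R)
  (X : finType) (emb : X -> M) (gamma : R) :
  is_metric d -> injective emb -> 3 <= gamma ->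
  forall s : seq {set {set X}}, single_linkage_run d emb s ->
  forall (k : nat) (C : 'I_k -> {set X}) (mu : 'I_k -> M),
    k_clustering C -> center_based d emb C mu -> gamma_margin d emb gamma C mu ->
    forall i : 'I_k, sl_node s (C i).
Proof.
move=> [d0 _ dsym dtri] _ g3 s [Hp Hl] k C mu [ne _ _] _ marg i.
have [x0 Hx0] : exists x, x \in C i.
  by apply/set0Pn; exact: ne.
have sep : forall x y z, x \in C i -> y \in C i -> z \notin C i ->
     dX d emb x y < dX d emb x z.
  move=> x y z xS yS zS; rewrite /dX.
  have h1 := marg i x z xS zS.
  have h2 := marg i y z yS zS.
  have t1 := dtri (emb x) (mu i) (emb y).
  have t2 := dtri (emb z) (emb x) (mu i).
  rewrite (dsym (mu i) (emb y)) in t1.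
  rewrite (dsym (emb z) (emb x)) in t2.
  have p1 := d0 (emb x) (mu i).
  have p2 := d0 (emb y) (mu i).
  have q1 : 3 * d (emb x) (mu i) <= gamma * d (emb x) (mu i) by rewrite ler_wpM2r.
  have q2 : 3 * d (emb y) (mu i) <= gamma * d (emb y) (mu i) by rewrite ler_wpM2r.
  lra.
have sym : forall x y, dX d emb x y = dX d emb y x by move=> x y; rewrite /dX dsym.
refine (@main_lem R M d X emb (C i) x0 Hx0 sep sym s _ Hp Hl _ _).
- move=> x; exists [set x]; last by rewrite inE.
  by apply/imsetP; exists x.
- move=> A /imsetP [x _ ->].
  case xS: (x \in C i).
    by left; rewrite sub1set.
  by right; rewrite disjoints1 xS.
Qed.
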